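(* Let $\mathcal{A}\in\mathbb{R}^{I_1\times I_2\times I_3}$, $r_2=\min\{I_1,I_2\}$, and let $\boldsymbol{A}_{(3)}=\boldsymbol{U}^{(3)}\boldsymbol{S}^{(3)}\boldsymbol{V}^{(3)T}$ be an SVD with singular values in descending order, $\boldsymbol{U}^{(3)}\in\mathbb{R}^{I_3\times I_3}$ orthogonal. Let $\widetilde{\mathcal{A}}=\mathcal{A}\times_3\boldsymbol{U}^{(3)T}$ and for $i=1,\dots,I_3$ let $s_{jji}$ ($j=1,\dots,r_2$) denote the singular values of the frontal slice $\widetilde{\mathcal{A}}(:,:,i)$ in descending order (the diagonal entries of the O-SVD core $\mathcal{S}$). Let $\boldsymbol{k}=[k_1;\boldsymbol{k}_2]$ with $1\le k_1\le I_3$ and $\boldsymbol{k}_2=[k_{21},\dots,k_{2k_1}]^T$, $0\le k_{2i}\le r_2$. Define the $\boldsymbol{k}$-term truncated O-SVD $$\mathcal{A}_{\boldsymbol{k}}=(\mathcal{U}_{k_2}*_3\mathcal{S}_{k_2}*_3\mathcal{V}_{k_2})\times_3\boldsymbol{U}^{(3)}_{k_1},$$ where $\boldsymbol{U}^{(3)}_{k_1}=\boldsymbol{U}^{(3)}(:,1:k_1)$ and, for each $i=1,\dots,k_1$, the slice $\mathcal{U}_{k_2}(:,:,i)\mathcal{S}_{k_2}(:,:,i)\mathcal{V}_{k_2}(:,:,i)$ equals the rank-$k_{2i}$ truncated SVD of $\widetilde{\mathcal{A}}(:,:,i)$ (i.e. $\mathcal{U}_{k_2}(:,1:k_{2i},i)$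 holds its $k_{2i}$ leading left singular vectors, $\mathcal{S}_{k_2}(1:k_{2i},1:k_{2i},i)=\mathrm{diag}(s_{11i},\dots,s_{k_{2i}k_{2i}i})$, $\mathcal{V}_{k_2}(1:k_{2i},:,i)$ holds the transposes of its $k_{2i}$ leading right singular vectors, all other entries zero). Then $$\|\mathcal{A}-\mathcal{A}_{\boldsymbol{k}}\|_F^2=\sum_{i=1}^{k_1}\sum_{j=k_{2i}+1}^{r_2}s_{jji}^2+\sum_{i=k_1+1}^{I_3}\sum_{j=1}^{r_2}s_{jji}^2 .$$
   Context: For $\mathcal{A}\in\mathbb{R}^{I_1\times I_2\times I_3}$, $\mathcal{A}(:,:,k)$ is the $k$-th frontal slice; $\boldsymbol{A}_{(3)}\in\mathbb{R}^{I_3\times I_1I_2}$ is the mode-3 unfolding whose columns are the mode-3 fibers. The mode-3 product with $\boldsymbol{M}\in\mathbb{R}^{J\times I_3}$ is $(\mathcal{A}\times_3\boldsymbol{M})_{ijl}=\sum_k a_{ijk}m_{lk}$. The slicewise product $\mathcal{A}*_3\mathcal{B}$ of tensors with compatible frontal slices is defined by $(\mathcal{A}*_3\mathcal{B})(:,:,k)=\mathcal{A}(:,:,k)\mathcal{B}(:,:,k)$. $\|\cdot\|_F$ is the square root of the sum of squares of all entries. *)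

(* Defs.v *)
From HB Require Import structures.
From mathcomp Require Import all_boot all_order all_algebra.
From mathcomp Require Import reals.
Set Implicit Arguments. Unset Strict Implicit. Unset Printing Implicit Defensive.
Import Order.TTheory GRing.Theory Num.Theory.
Local Open Scope ring_scope.

(* A third-order tensor in R^{I1 x I2 x I3}, represented by its frontal slices:
   T k = T(:,:,k). *)
Definition tensor (R : Type) (I1 I2 I3 : nat) := 'I_I3 -> 'M[R]_(I1, I2).

(* Mode-3 unfolding A_(3) in R^{I3 x I1 I2}: row k is vec of the k-th frontal
   slice, so the columns are the mode-3 fibers (column order = mxvec order). *)
Definition unfold3 (R : Type) I1 I2 I3 (A : tensor R I1 I2 I3) : 'M[R]_(I3, I1 * I2) :=
  \matrix_(k, c) mxvec (A k) 0 c.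

Definition mode3 (R : pzRingType) I1 I2 I3 J (A : tensor R I1 I2 I3)
  (M : 'M[R]_(J, I3)) : tensor R I1 I2 J :=
  fun l => \sum_(k < I3) M l k *: A k.

Definition sprod3 (R : pzRingType) I1 I2 I4 I3 (A : tensor R I1 I2 I3)
  (B : tensor R I2 I4 I3) : tensor R I1 I4 I3 :=
  fun k => A k *m B k.

Definition tfrob (R : rcfType) I1 I2 I3 (T : tensor R I1 I2 I3) : R :=
  Num.sqrt (\sum_(k < I3) \sum_(i < I1) \sum_(j < I2) T k i j ^+ 2).

Definition is_svd (R : realFieldType) m n (M : 'M[R]_(m, n)) (U : 'M[R]_m)
  (S : 'M[R]_(m, n)) (V : 'M[R]_n) : Prop :=
  [/\ U^T *m U = 1%:M, V^T *m V = 1%:M,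
      (forall (i : 'I_m) (j : 'I_n), (i : nat) <> j -> S i j = 0),
      (forall (i : 'I_m) (j : 'I_n), (i : nat) = j -> 0 <= S i j) /\
      (forall (i1 j1 : 'I_m) (i2 j2 : 'I_n), (i1 : nat) = i2 -> (j1 : nat) = j2 ->
          (i1 <= j1)%N -> S j1 j2 <= S i1 i2)
    & M = U *m S *m V^T].

Definition sdiag (R : Type) m n (S : 'M[R]_(m, n)) (j : 'I_(minn m n)) : R :=
  S (widen_ord (geq_minl m n) j) (widen_ord (geq_minr m n) j).

Definition Utrunc (R : pzRingType) m (U : 'M[R]_m) (k : nat) : 'M[R]_m :=
  \matrix_(a, b) (if (b < k)%N then U a b else 0).
Definition Strunc (R : pzRingType) m n (S : 'M[R]_(m, n)) (k : nat) : 'M[R]_(m, n) :=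
  \matrix_(a, b) (if (a < k)%N && (b < k)%N then S a b else 0).
Definition Vtrunc (R : pzRingType) n (V : 'M[R]_n) (k : nat) : 'M[R]_n :=
  \matrix_(a, b) (if (a < k)%N then V^T a b else 0).

(* Main.v *)
Require Import Defs.
From HB Require Import structures.
From mathcomp Require Import all_boot all_order all_algebra.
From mathcomp Require Import reals.
Import Order.TTheory GRing.Theory Num.Theory.
Local Open Scope ring_scope.

From mathcomp Require Import ring.

Section Helpers.
Set Implicit Arguments.
Variable R : realType.

Definition fro2 (m n : nat) (M : 'M[R]_(m, n)) : R := \sum_i \sum_j M i j ^+ 2.
Arguments fro2 {m n}.

Lemma fro_tr m n (M : 'M[R]_(m, n)) : \tr (M *m M^T) = fro2 M.
Proof.
rewrite /mxtrace /fro2; apply: eq_bigr => i _; rewrite mxE.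
by apply: eq_bigr => j _; rewrite mxE expr2.
Qed.

Lemma fro_orth m n (U : 'M[R]_m) (V : 'M[R]_n) (X : 'M[R]_(m, n)) :
  U^T *m U = 1%:M -> V^T *m V = 1%:M -> fro2 (U *m X *m V^T) = fro2 X.
Proof.
move=> hU hV; rewrite -!fro_tr !trmx_mul !trmxK !mulmxA.
rewrite -[U *m X *m V^T *m V]mulmxA hV mulmx1.
by rewrite mxtrace_mulC !mulmxA hU mul1mx.
Qed.

Lemma fro_diag m n (S : 'M[R]_(m, n)) k :
  (forall (i : 'I_m) (j : 'I_n), (i : nat) <> j -> S i j = 0) ->
  fro2 (S - Strunc S k) = \sum_(j < minn m n | (k <= j)%N) sdiag S j ^+ 2.
Proof.
move=> hd; rewrite /fro2.
have h1 : forall a, \sum_b (S - Strunc S k) a b ^+ 2 =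
   \sum_(b : 'I_n | (b : nat) == a) (S - Strunc S k) a b ^+ 2.
  move=> a; rewrite (bigID (fun b : 'I_n => (b : nat) == a)) /= [X in _ + X]big1 ?addr0 //.
  move=> b hb; rewrite !mxE hd ?sub0r; last by move=> e; rewrite e eqxx in hb.
  by case: ifP => _; rewrite ?oppr0 expr2 mulr0.
under eq_bigr do rewrite h1.
rewrite (bigID (fun a : 'I_m => (a < minn m n)%N)) /= [X in _ + X]big1 ?addr0; last first.
  move=> a ha; apply: big1 => b /eqP hb; exfalso.
  by move: ha; rewrite leq_min ltn_ord /= -hb ltn_ord.
rewrite (big_ord_narrow (geq_minl m n)) /=.
rewrite [RHS]big_mkcond /=; apply: eq_bigr => j _.
rewrite (big_pred1 (widen_ord (geq_minr m n) j)); last first.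
  by move=> b /=; rewrite -val_eqE.
rewrite /sdiag !mxE /=.
case: (ltnP j k) => hjk /=.
  by rewrite subrr expr2 mulr0.
by rewrite subr0.
Qed.

Lemma trunc_fro m n (M : 'M[R]_(m, n)) U S V k : is_svd M U S V ->
  fro2 (M - Utrunc U k *m Strunc S k *m Vtrunc V k) =
  \sum_(j < minn m n | (k <= j)%N) sdiag S j ^+ 2.
Proof.
case=> hU hV hd _ ->.
have -> : Utrunc U k *m Strunc S k *m Vtrunc V k = U *m Strunc S k *m V^T.
  apply/matrixP => a c; rewrite !mxE; apply: eq_bigr => b _; rewrite !mxE.
  case: (ltnP b k) => hb.
    congr (_ * _); apply: eq_bigr => x _; rewrite !mxE.
    by case: (ltnP x k) => hx //=; rewrite mul0r mulr0.
  rewrite mulr0; symmetry; rewrite big1 ?mul0r // => x _.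
  by rewrite !mxE [(b < k)%N]ltnNge hb andbF mulr0.
by rewrite -mulmxBl -mulmxBr fro_orth // fro_diag.
Qed.

Lemma svd_fro m n (M : 'M[R]_(m, n)) U S V : is_svd M U S V ->
  fro2 M = \sum_(j < minn m n) sdiag S j ^+ 2.
Proof.
move=> h; have := trunc_fro 0 h.
have -> : Utrunc U 0 = 0 by apply/matrixP => a b; rewrite !mxE.
by rewrite !mul0mx subr0 => ->.
Qed.

Lemma ortho_vec n (U : 'M[R]_n) (d : 'I_n -> R) : U^T *m U = 1%:M ->
  \sum_l (\sum_i U l i * d i) ^+ 2 = \sum_i d i ^+ 2.
Proof.
move=> hU.
transitivity (\sum_l \sum_i \sum_i' (U l i * d i) * (U l i' * d i')).
  by apply: eq_bigr => l _; rewrite expr2 big_distrl; apply: eq_bigr => i _; rewrite big_distrr.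
rewrite exchange_big; apply: eq_bigr => i _; rewrite exchange_big /=.
transitivity (\sum_i' (d i * d i') * ((i == i')%:R : R)).
  apply: eq_bigr => i' _.
  have -> : ((i == i')%:R : R) = (U^T *m U) i i' by rewrite hU mxE.
  rewrite mxE big_distrr; apply: eq_bigr => l _; rewrite mxE /=; ring.
rewrite (bigD1 (i : 'I_n)) //= eqxx mulr1 big1 ?addr0 ?expr2 // => i' hi.
by rewrite eq_sym (negbTE hi) mulr0.
Qed.

Lemma ortho3 n p q (U : 'M[R]_n) (D : 'I_n -> 'M[R]_(p, q)) : U^T *m U = 1%:M ->
  \sum_l fro2 (\sum_i U l i *: D i) = \sum_i fro2 (D i).
Proof.
move=> hU; rewrite /fro2 exchange_big [RHS]exchange_big; apply: eq_bigr => a _.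
rewrite exchange_big [RHS]exchange_big; apply: eq_bigr => b _.
rewrite -(ortho_vec (fun i => D i a b) hU); apply: eq_bigr => l _.
by rewrite summxE; congr (_ ^+ 2); apply: eq_bigr => i _; rewrite mxE.
Qed.

Lemma tfrob_sq I1 I2 I3 (T : tensor R I1 I2 I3) :
  tfrob T ^+ 2 = \sum_k fro2 (T k).
Proof.
rewrite /tfrob sqr_sqrtr //; apply: sumr_ge0 => k _; apply: sumr_ge0 => i _.
by apply: sumr_ge0 => j _; apply: sqr_ge0.
Qed.

End Helpers.
Unset Implicit Arguments.

Theorem theorem3p3 (R : realType) (I1 I2 I3 : nat) (A : tensor R I1 I2 I3)
  (U3 : 'M[R]_I3) (S3 : 'M[R]_(I3, I1 * I2)) (V3 : 'M[R]_(I1 * I2))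
  (hsvd3 : is_svd (unfold3 A) U3 S3 V3)
  (Us : 'I_I3 -> 'M[R]_I1) (Ss : 'I_I3 -> 'M[R]_(I1, I2)) (Vs : 'I_I3 -> 'M[R]_I2)
  (hsvd : forall i : 'I_I3, is_svd (mode3 A U3^T i) (Us i) (Ss i) (Vs i))
  (k1 : nat) (hk1pos : (1 <= k1)%N) (hk1 : (k1 <= I3)%N)
  (k2 : 'I_k1 -> nat) (hk2 : forall i, (k2 i <= minn I1 I2)%N) :
  let Uk2 : tensor R I1 I1 k1 := fun i => Utrunc (Us (widen_ord hk1 i)) (k2 i) in
  let Sk2 : tensor R I1 I2 k1 := fun i => Strunc (Ss (widen_ord hk1 i)) (k2 i) in
  let Vk2 : tensor R I2 I2 k1 := fun i => Vtrunc (Vs (widen_ord hk1 i)) (k2 i) in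
  let U3k1 : 'M[R]_(I3, k1) := \matrix_(a, b) U3 a (widen_ord hk1 b) in
  let Ak : tensor R I1 I2 I3 := mode3 (sprod3 (sprod3 Uk2 Sk2) Vk2) U3k1 in
  tfrob (fun k => A k - Ak k) ^+ 2 =
    \sum_(i < k1) \sum_(j < minn I1 I2 | (k2 i <= j)%N)
        sdiag (Ss (widen_ord hk1 i)) j ^+ 2
  + \sum_(i < I3 | (k1 <= i)%N) \sum_(j < minn I1 I2) sdiag (Ss i) j ^+ 2.
Proof.
Proof.
move=> Uk2 Sk2 Vk2 U3k1 Ak.
case: hsvd3 => hU _ _ _ _.
have hU' : U3 *m U3^T = 1%:M by apply: mulmx1C.
pose At := mode3 A U3^T.
pose T b := Uk2 b *m Sk2 b *m Vk2 b.
pose D i := At i - \sum_(b < k1) ((widen_ord hk1 b == i)%:R : R) *: T b.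
have winj : injective (widen_ord hk1).
  by move=> x y /(congr1 val) /= e; apply: val_inj.
have hD : forall l, A l - Ak l = \sum_i U3 l i *: D i.
  move=> l; rewrite /D; under eq_bigr do rewrite scalerBr.
  rewrite sumrB; congr (_ - _).
    rewrite /At /mode3; under eq_bigr do rewrite scaler_sumr.
    rewrite exchange_big /=.
    rewrite (eq_bigr (fun k => ((l == k)%:R : R) *: A k)); last first.
      move=> k _; have -> : ((l == k)%:R : R) = (U3 *m U3^T) l k by rewrite hU' mxE.
      rewrite mxE scaler_suml; apply: eq_bigr => i _; by rewrite scalerA.
    rewrite (bigD1 l) //= eqxx scale1r big1 ?addr0 // => k hk.
    by rewrite eq_sym (negbTE hk) scale0r.
  rewrite /Ak /mode3; symmetry; under eq_bigr do rewrite scaler_sumr.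
  rewrite exchange_big; apply: eq_bigr => b _.
  rewrite (bigD1 (widen_ord hk1 b)) //= eqxx scale1r big1 ?addr0.
    by rewrite /U3k1 mxE.
  by move=> i hi; rewrite eq_sym (negbTE hi) scale0r scaler0.
rewrite tfrob_sq.
under eq_bigr do rewrite hD.
rewrite ortho3 //.
rewrite (bigID (fun i : 'I_I3 => (i < k1)%N)) /=; congr (_ + _).
  rewrite (big_ord_narrow hk1); apply: eq_bigr => b _.
  rewrite /D (bigD1 b) //= eqxx scale1r big1 ?addr0; last first.
    by move=> b' hb'; rewrite (inj_eq winj) (negbTE hb') scale0r.
  rewrite /T /Uk2 /Sk2 /Vk2; apply: trunc_fro; exact: hsvd.
apply: eq_big => [i|i hi]; first by rewrite -leqNgt.
rewrite /D big1 ?subr0; first exact: (svd_fro (hsvd i)).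
move=> b _; have /negbTE -> : widen_ord hk1 b != i.
  apply/negP => /eqP e; move: hi; rewrite -e /= ltn_ord //.
by rewrite scale0r.
Qed.
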